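(* Let $X$ be a metric space and $x\in X$. Assume (a) there exist constants $c\ge1$, $a\in(0,1]$ such that for all $r\le a$, $\lambda,\mu\le1$ and $y,z\in B_X(x,r)$, $n(\lambda\mu r,B_X(y,\lambda r))\le c\,n(\lambda\mu r,B_X(z,\lambda r))$; and (b) $\limsup_{r\to0}n_{\lambda r}(\overline{B}_X(x,r))<\infty$ for all $\lambda>0$. Define $g(t,h)=\log n(e^{-(t+h)},B_X(x,e^{-t}))$ and $dg(t,h,k)=g(t,h+k)-g(t+h,k)-g(t,h)$. Then there is $t_0$ such that $dg$ is bounded on $\{(t,h,k):t>t_0,\ h,k>0\}$.
   Context: $B_X(x,r)$ is the open ball, $\overline{B}_X(x,r)$ the closed ball; $n(s,A)=n_s(A)$ is the minimum number of open balls of radius $s$ needed to cover $A$. *)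

(* Defs.v *)
From HB Require Import structures.
From mathcomp Require Import all_boot all_order all_algebra.
From mathcomp Require Import all_classical all_reals all_analysis.
Set Implicit Arguments. Unset Strict Implicit. Unset Printing Implicit Defensive.
Import Order.TTheory GRing.Theory Num.Theory.
Local Open Scope classical_set_scope.
Local Open Scope ring_scope.

Definition oball {R : realType} {T : metricType R} (x : T) (r : R) : set T :=
  [set y | mdist x y < r].

Definition cball {R : realType} {T : metricType R} (x : T) (r : R) : set T :=
  [set y | mdist x y <= r].

Definition covered_by {R : realType} {T : metricType R} (s : R) (A : set T) (N : nat) : Prop :=
  exists c : 'I_N -> T, A `<=` \bigcup_(i in [set: 'I_N]) oball (c i) s.

(* n(s,A): minimum number of open balls of radius s covering A; +oo if none *)
Definition covnum {R : realType} {T : metricType R} (s : R) (A : set T) : \bar R :=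
  ereal_inf [set (N%:R)%:E | N in [set N : nat | covered_by s A N]].

Definition gfun {R : realType} {T : metricType R} (x : T) (t h : R) : \bar R :=
  lne (covnum (expR (- (t + h))) (oball x (expR (- t)))).

Definition dgfun {R : realType} {T : metricType R} (x : T) (t h k : R) : \bar R :=
  (gfun x t (h + k) - gfun x (t + h) k - gfun x t h)%E.

(* Main.v *)
Require Import Defs.
From HB Require Import structures.
From mathcomp Require Import all_boot all_order all_algebra.
From mathcomp Require Import all_classical all_reals all_analysis.
From mathcomp Require Import lra ring.
Import Order.TTheory GRing.Theory Num.Theory.
Local Open Scope classical_set_scope.
Local Open Scope ring_scope.

Section Cov.
Variables (R : realType) (T : metricType R) (x : T).

Definition covers (s : R) (A : set T) (l : seq T) :=
  forall w, A w -> has (fun c => mdist c w < s) l.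

Lemma covered_byP (s : R) (A : set T) (N : nat) :
  Defs.covered_by s A N <-> exists l, size l = N /\ covers s A l.
Proof.
split.
- move=> [c Hc]; exists [seq c i | i <- enum 'I_N]; split.
    by rewrite size_map size_enum_ord.
  move=> w Aw; case: (Hc w Aw) => i _ H; apply/hasP; exists (c i) => //.
  by apply: map_f; rewrite mem_enum.
- move=> [l [<- Hl]]; exists (fun i : 'I_(size l) => nth x l i).
  move=> w Aw; have/hasP[c0 c0l H] := Hl w Aw.
  have Hi : (index c0 l < size l)%N by rewrite index_mem.
  exists (Ordinal Hi) => //=.
  by rewrite /oball /= nth_index.
Qed.

Lemma covnum_le (s : R) (A : set T) (l : seq T) : covers s A l -> (covnum s A <= (size l)%:R%:E)%E.
Proof.
move=> H; apply: ereal_inf_lbound; exists (size l) => //.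
by apply/covered_byP; exists l.
Qed.

Lemma covnum_exact (s : R) (A : set T) : (exists l, covers s A l) ->
  exists l, covnum s A = (size l)%:R%:E /\ covers s A l /\
    forall l', covers s A l' -> (size l <= size l')%N.
Proof.
move=> [l0 Hl0].
pose P := fun n => `[< exists l, size l = n /\ covers s A l >].
have exP : exists n, P n by exists (size l0); apply/asboolP; exists l0.
case: (ex_minnP exP) => m /asboolP [l [Hs Hc]] Hmin.
exists l; split; last split => //.
- apply/eqP; rewrite eq_le; apply/andP; split; first exact: covnum_le.
  apply: le_ereal_inf_tmp => _ [N /covered_byP HN <-].
  rewrite lee_fin ler_nat Hs; apply: Hmin; exact/asboolP.
- by move=> l' Hl'; rewrite Hs; apply: Hmin; apply/asboolP; exists l'.
Qed.

Lemma covnum_fin (s : R) (A : set T) (r : R) : (covnum s A <= r%:E)%E -> exists l, covers s A l.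
Proof.
move=> H.
have : (covnum s A < (r + 1)%:E)%E by apply: (le_lt_trans H); rewrite lte_fin ltrDl.
move=> /ereal_inf_lt [_ [N /covered_byP [l [_ Hl]] <-] _]; by exists l.
Qed.

End Cov.
Arguments covers {R T}.

Section Comb.
Variables (R : realType) (T : metricType R).

Lemma covers_sub (s : R) (A B : set T) l : A `<=` B -> covers s B l -> covers s A l.
Proof. by move=> AB H w /AB /H. Qed.

Lemma covers_mono (s s' : R) (A : set T) l : s <= s' -> covers s A l -> covers s' A l.
Proof.
move=> ss H w /H /hasP [c cl Hc]; apply/hasP; exists c => //; exact: lt_le_trans Hc ss.
Qed.

Lemma covers_union (s K : R) (P : seq T) (B : T -> set T) : 0 <= K ->
  forall (A : set T), (forall w, A w -> exists2 p, p \in P & B p w) ->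
  (forall p, p \in P -> exists l, (size l)%:R <= K /\ covers s (A `&` B p) l) ->
  exists l, (size l)%:R <= (size P)%:R * K /\ covers s A l.
Proof.
move=> K0; elim: P => [|p P IH] A HA HP; last first.
have [lp [Hlp Hcp]] := HP p (mem_head _ _).
have H1 : forall w, (A `&` ~` B p) w -> exists2 q, q \in P & B q w.
  move=> w [Aw nBw]; have [q] := HA w Aw; rewrite in_cons => /orP [/eqP ->|qP] Bq //.
  by exists q.
have H2 : forall q, q \in P -> exists l, (size l)%:R <= K /\ covers s ((A `&` ~` B p) `&` B q) l.
  move=> q qP; have [lq [Hlq Hcq]] := HP q (mem_behead (s:=p::P) qP).
  exists lq; split => //; apply: covers_sub Hcq => w [[Aw _] Bw]; by split.
have [l' [Hl' Hc']] := IH (A `&` ~` B p) H1 H2.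
exists (lp ++ l'); split.
  rewrite size_cat natrD /= -addn1 natrD mulrDl mul1r addrC; exact: lerD.
move=> w Aw; rewrite has_cat; apply/orP.
case: (pselect (B p w)) => Bw; first by left; apply: Hcp.
by right; apply: Hc'.
exists [::]; split; first by rewrite /= mul0r.
by move=> w /HA [p].
Qed.

Lemma sum_count_le (Q : T -> T -> bool) (P : seq T) : uniq P ->
  (forall p q c, p \in P -> q \in P -> Q p c -> Q q c -> p = q) ->
  forall l, (\sum_(p <- P) count (Q p) l <= size l)%N.
Proof.
elim: P => [|p P IH] /= uP HQ l; first by rewrite big_nil.
case/andP: uP => pnP uP.
rewrite big_cons.
have -> : (\sum_(q <- P) count (Q q) l = \sum_(q <- P) count (Q q) ([seq c <- l | ~~ Q p c]))%N.
  rewrite big_seq_cond [in RHS]big_seq_cond; apply: eq_bigr => q /andP [qP _].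
  rewrite count_filter; apply: eq_count => c /=.
  case Hq: (Q q c) => /=; last by []. 
  apply/esym/negP => Hp.
  have pq := HQ p q c (mem_head _ _) (mem_behead (s:=p::P) qP) Hp Hq.
  by move: pnP; rewrite pq qP.
have := IH uP (fun p0 q c H1 H2 => HQ p0 q c (mem_behead (s:=p::P) H1) (mem_behead (s:=p::P) H2)) ([seq c <- l | ~~ Q p c]).
rewrite size_filter => H.
rewrite -(count_predC (Q p) l); exact: leq_add.
Qed.

Definition sepin (d : R) (A : set T) (P : seq T) :=
  [/\ uniq P, (forall p, p \in P -> A p) &
      (forall p q, p \in P -> q \in P -> p != q -> d <= mdist p q)].

Lemma sep_size (d : R) (A : set T) P l : 0 < d -> sepin d A P ->
  covers (d / 2) A l -> (size P <= size l)%N.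
Proof.
move=> d0 [uP PA Psep] Hc.
apply: leq_trans (@sum_count_le (fun p c => mdist c p < d / 2) P uP _ l).
- rewrite -sum1_size big_seq [in X in (_ <= X)%N]big_seq; apply: leq_sum => p pP.
  by rewrite -has_count; apply: Hc; apply: PA.
- move=> p q c pP qP Hp Hq; apply/eqP; apply/negPn/negP => pq.
  have := Psep p q pP qP pq.
  have := metric_triangle p c q; rewrite (metric_sym p c) => H1 H2.
  lra.
Qed.

Lemma max_sep (d : R) (A : set T) (Nb : nat) : 0 < d ->
  (forall P, sepin d A P -> (size P <= Nb)%N) ->
  exists P, sepin d A P /\ forall w, A w -> has (fun p => mdist p w < d) P.
Proof.
move=> d0 Hb.
pose Pn := fun n => `[< exists P, sepin d A P /\ size P = n >].
have exP : exists n, Pn n.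
  exists 0%N; apply/asboolP; exists [::]; split => //; split => //.
have ubP : forall n, Pn n -> (n <= Nb)%N.
  by move=> n /asboolP [P [HP <-]]; apply: Hb.
case: (ex_maxnP exP ubP) => m /asboolP [P [HP Hs]] Hmax.
exists P; split => // w Aw; apply/negPn/negP => /hasPn Hn.
have wP : w \notin P.
  apply/negP => wP; have := Hn w wP; by rewrite mdistxx d0.
have : Pn (size (rcons P w)).
  apply/asboolP; exists (rcons P w); split => //.
  case: HP => uP PA Psep; split.
  - by rewrite rcons_uniq wP uP.
  - by move=> p; rewrite mem_rcons in_cons => /orP [/eqP ->|/PA].
  - move=> p q; rewrite !mem_rcons !in_cons => /orP [/eqP ->|pP] /orP [/eqP ->|qP].
    + by rewrite eqxx.
    + by move=> _; rewrite metric_sym leNgt; apply: Hn.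
    + by move=> _; rewrite leNgt; apply: Hn.
    + exact: Psep.
move=> /Hmax; by rewrite size_rcons Hs ltnn.
Qed.

End Comb.
Arguments sepin {R T}.

Section Geo.
Variables (R : realType) (T : metricType R) (x : T) (c a r0 M : R).
Hypothesis c1 : 1 <= c.
Hypothesis M0 : 0 <= M.
Hypothesis Ha : forall (R0 rho s : R) (y z : T) (l : seq T), 0 < R0 -> R0 <= a ->
  oball x R0 y -> oball x R0 z -> 0 < rho -> rho <= R0 -> 0 < s -> s <= rho ->
  covers s (oball z rho) l ->
  exists l', (size l')%:R <= c * (size l)%:R /\ covers s (oball y rho) l'.
Hypothesis Hb : forall rho : R, 0 < rho -> rho < r0 ->
  exists l, (size l)%:R <= M /\ covers (rho / 2) (cball x rho) l.

Lemma oball_cball (y : T) r : oball y r `<=` cball y r.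
Proof. by move=> w; rewrite /oball /cball /=; apply: ltW. Qed.

Lemma doubling (rho s : R) (l : seq T) : 0 < rho -> rho < r0 -> 2 * rho <= a -> 0 < s ->
  s <= rho / 2 -> covers s (oball x (rho / 2)) l ->
  exists l', (size l')%:R <= M * (c * (size l)%:R) /\ covers s (oball x rho) l'.
Proof.
move=> rho0 rhor0 rhoa s0 srho Hl.
have [lb [Hlb Hcb]] := Hb rho rho0 rhor0.
have K0 : 0 <= c * (size l)%:R by apply: mulr_ge0; [exact: le_trans ler01 c1 | exact: ler0n].
have := @covers_union R T s (c * (size l)%:R) lb (fun p => oball p (rho / 2)) K0
  (oball x rho).
case.
- move=> w Aw; have /hasP [p pl Hp] := Hcb w (@oball_cball x rho w Aw); by exists p.
- move=> p pl; case: (pselect (exists w, oball x rho w /\ oball p (rho / 2) w)).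
    move=> [w [H1 H2]].
    have xp : oball x (2 * rho) p.
      move: H1 H2; rewrite /oball /= => H1 H2.
      have := metric_triangle x w p; rewrite (metric_sym w p); lra.
    have xx : oball x (2 * rho) x by rewrite /oball /= mdistxx; lra.
    have [l' [Hs Hc]] := Ha (2 * rho) (rho / 2) s p x l
      ltac:(lra) rhoa xp xx ltac:(lra) ltac:(lra) s0 srho Hl.
    exists l'; split => //; apply: covers_sub Hc => w0 [] //.
  move=> Hn; exists [::]; split => //=; move=> w [H1 H2]; exfalso; apply: Hn; by exists w.
move=> l' [Hs Hc]; exists l'; split => //.
apply: (le_trans Hs); exact: ler_wpM2r.
Qed.

Lemma finite_cov s : 0 < s -> forall rho, 0 < rho -> rho < r0 -> 2 * rho <= a ->
  exists l, covers s (oball x rho) l.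
Proof.
move=> s0.
suff H : forall n : nat, forall rho, 0 < rho -> rho <= 2 ^+ n * s -> rho < r0 ->
    2 * rho <= a -> exists l, covers s (oball x rho) l.
  move=> rho rho0 rhor0 rhoa; apply: (H (Num.Def.trunc (rho / s)).+1) => //.
  have h1 := truncnS_gt (rho / s).
  have h2 : ((Num.Def.trunc (rho / s)).+1%:R : R) <= 2 ^+ (Num.Def.trunc (rho / s)).+1.
    by rewrite -natrX ler_nat; apply: ltnW; apply: ltn_expl.
  have : rho / s <= 2 ^+ (Num.Def.trunc (rho / s)).+1 by apply: ltW; apply: lt_le_trans h2.
  by rewrite ler_pdivrMr.
elim => [|n IH] rho rho0 rhon rhor0 rhoa.
  exists [:: x] => w; rewrite /oball /= => Hw; rewrite orbF.
  by apply: lt_le_trans Hw _; rewrite expr0 mul1r in rhon.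
case: (lerP rho (2 * s)) => Hr.
  have [l [_ Hl]] := Hb rho rho0 rhor0; exists l.
  apply: (@covers_mono R T (rho / 2)); [lra | exact: covers_sub (@oball_cball x rho) Hl].
have [l Hl] := IH (rho / 2) ltac:(lra) ltac:(rewrite exprS in rhon; lra) ltac:(lra) ltac:(lra).
have [l' [_ Hl']] := doubling rho s l rho0 rhor0 rhoa s0 ltac:(lra) Hl.
by exists l'.
Qed.


Lemma sum_const_seq (P : seq T) (v : R) : \sum_(p <- P) v = (size P)%:R * v.
Proof.
elim: P => [|p P IH]; first by rewrite big_nil mul0r.
by rewrite big_cons IH /= -addn1 natrD mulrDl mul1r addrC.
Qed.

Lemma c0 : 0 <= c. Proof. exact: le_trans ler01 c1. Qed.

Lemma upper (r sig s : R) (l2 l3 : seq T) : 0 < s -> s <= sig -> sig <= r -> 2 * r <= a ->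
  covers sig (oball x r) l2 -> covers s (oball x sig) l3 ->
  exists l1, (size l1)%:R <= (size l2)%:R * (c * (size l3)%:R) /\ covers s (oball x r) l1.
Proof.
move=> s0 ssig sigr ra H2 H3.
have K0 : 0 <= c * (size l3)%:R by apply: mulr_ge0; [exact: c0 | exact: ler0n].
apply: (@covers_union R T s (c * (size l3)%:R) l2 (fun p => oball p sig) K0).
- move=> w Aw; have /hasP [p pl Hp] := H2 w Aw; by exists p.
- move=> p pl; case: (pselect (exists w, oball x r w /\ oball p sig w)).
    move=> [w [H1 H1']].
    have xp : oball x (2 * r) p.
      move: H1 H1'; rewrite /oball /= => H1 H1'.
      have := metric_triangle x w p; rewrite (metric_sym w p); lra.
    have xx : oball x (2 * r) x by rewrite /oball /= mdistxx; lra.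
    have [l' [Hs Hc]] := Ha (2 * r) sig s p x l3
      ltac:(lra) ra xp xx ltac:(lra) ltac:(lra) s0 ssig H3.
    exists l'; split => //; apply: covers_sub Hc => w0 [] //.
  move=> Hn; exists [::]; split => //=; move=> w [H1 H1']; exfalso; apply: Hn; by exists w.
Qed.

Lemma lower_main (r sig s : R) (l1 l2 l3 : seq T) : 0 < s -> s <= sig / 2 -> sig <= r / 2 ->
  r < r0 -> 2 * r <= a ->
  (forall l, covers sig (oball x r) l -> (size l2 <= size l)%N) ->
  (forall l, covers s (oball x sig) l -> (size l3 <= size l)%N) ->
  covers s (oball x r) l1 ->
  (size l2)%:R * (size l3)%:R <= (M * (c * (c * M))) * (M * (c * c)) * (size l1)%:R.
Proof.
move=> s0 ssig sigr rr0 ra Hmin2 Hmin3 H1.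
have sig0 : 0 < sig by lra.
have r0' : 0 < r by lra.
have [lsig Hlsig] := finite_cov sig sig0 (r / 2) ltac:(lra) ltac:(lra) ltac:(lra).
have Hlsig' : covers (2 * sig / 2) (oball x (r / 2)) lsig.
  apply: (@covers_mono R T sig) => //; lra.
have Hbnd : forall P, sepin (2 * sig) (oball x (r / 2)) P -> (size P <= size lsig)%N.
  move=> P HP; have s2 : 0 < 2 * sig by lra.
  exact: (@sep_size R T (2 * sig) _ P lsig s2 HP Hlsig').
have [P [[uP PA Psep] Pmax]] := @max_sep R T (2 * sig) (oball x (r / 2)) (size lsig)
  ltac:(lra) Hbnd.
have cM0 : 0 <= c * M by apply: mulr_ge0; [exact: c0 | exact: M0].
have Hcov : forall w, oball x (r / 2) w -> exists2 p, p \in P & oball p (2 * sig) w.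
  move=> w Aw; have /hasP [p pP Hp] := Pmax w Aw; by exists p.
have Hper : forall p, p \in P -> exists l, (size l)%:R <= c * M /\ covers sig (oball x (r / 2) `&` oball p (2 * sig)) l.
  move=> p pP.
  have [lb [Hlb Hcb]] := Hb (2 * sig) ltac:(lra) ltac:(lra).
  have Hcb' : covers sig (oball x (2 * sig)) lb.
    apply: (@covers_mono R T (2 * sig / 2)); [lra | exact: covers_sub (@oball_cball x _) Hcb].
  have xp : oball x r p by have := PA p pP; rewrite /oball /=; lra.
  have xx : oball x r x by rewrite /oball /= mdistxx.
  have [l' [Hs Hc]] := Ha r (2 * sig) sig p x lb r0' ltac:(lra) xp xx ltac:(lra) ltac:(lra)
    sig0 ltac:(lra) Hcb'.
  exists l'; split; last by apply: covers_sub Hc => w0 [].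
  apply: (le_trans Hs); apply: ler_wpM2l; [exact: c0 | exact: Hlb].
have [lU [HlU HcU]] := @covers_union R T sig (c * M) P (fun p => oball p (2 * sig)) cM0
  (oball x (r / 2)) Hcov Hper.
have [l2' [Hl2' Hc2']] := doubling r sig lU r0' rr0 ra sig0 sigr HcU.
have N2b : (size l2)%:R <= M * (c * ((size P)%:R * (c * M))).
  apply: le_trans (_ : (size l2')%:R <= _); first by rewrite ler_nat; apply: Hmin2.
  apply: (le_trans Hl2'); apply: ler_wpM2l => //; apply: ler_wpM2l => //; exact: c0.
pose Q := fun p c0 : T => mdist p c0 < s + sig / 2.
have N3b : forall p, p \in P -> (size l3)%:R <= M * (c * c) * (count (Q p) l1)%:R.
  move=> p pP.
  have xp : oball x r p by have := PA p pP; rewrite /oball /=; lra.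
  have xx : oball x r x by rewrite /oball /= mdistxx.
  have Hlp : covers s (oball p (sig / 2)) [seq c0 <- l1 | Q p c0].
    move=> w; rewrite /oball /= => Hw.
    have Aw : oball x r w.
      have := PA p pP; rewrite /oball /= => xp2.
      have := metric_triangle x p w; lra.
    have /hasP [c' cl Hc'] := H1 w Aw.
    apply/hasP; exists c' => //; rewrite mem_filter cl andbT /Q.
    have := metric_triangle p w c'; rewrite (metric_sym w c'); lra.
  have [l'' [Hs'' Hc'']] := Ha r (sig / 2) s x p _ r0' ltac:(lra) xx xp ltac:(lra) ltac:(lra)
    s0 ssig Hlp.
  have [l3' [Hs3 Hc3]] := doubling sig s l'' sig0 ltac:(lra) ltac:(lra) s0 ssig Hc''.
  apply: le_trans (_ : (size l3')%:R <= _); first by rewrite ler_nat; apply: Hmin3.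
  apply: (le_trans Hs3); rewrite -mulrA; apply: ler_wpM2l => //.
  rewrite -mulrA; apply: ler_wpM2l; first exact: c0.
  by rewrite size_filter in Hs''.
have Hsum : (\sum_(p <- P) count (Q p) l1 <= size l1)%N.
  apply: sum_count_le => // p q c' pP qP Hp Hq; apply/eqP; apply/negPn/negP => pq.
  have := Psep p q pP qP pq.
  have := metric_triangle p c' q; rewrite (metric_sym c' q).
  move: Hp Hq; rewrite /Q => Hp Hq; lra.
have PN3 : (size P)%:R * (size l3)%:R <= M * (c * c) * (size l1)%:R.
  rewrite -sum_const_seq.
  apply: le_trans (_ : \sum_(p <- P) (M * (c * c) * (count (Q p) l1)%:R) <= _).
    rewrite big_seq [X in _ <= X]big_seq; apply: ler_sum => p pP; exact: N3b.
  rewrite -mulr_sumr -natr_sum; apply: ler_wpM2l; last by rewrite ler_nat.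
  apply: mulr_ge0 => //; apply: mulr_ge0; exact: c0.
have KK : 0 <= M * (c * (c * M)) by apply: mulr_ge0 => //; apply: mulr_ge0; [exact: c0|].
apply: le_trans (_ : M * (c * ((size P)%:R * (c * M))) * (size l3)%:R <= _).
  by apply: ler_wpM2r => //; exact: ler0n.
have -> : M * (c * ((size P)%:R * (c * M))) * (size l3)%:R =
  M * (c * (c * M)) * ((size P)%:R * (size l3)%:R) by ring.
rewrite -[X in _ <= X]mulrA.
apply: ler_wpM2l; [exact: KK | exact: PN3].
Qed.


Lemma lower_all (r sig s : R) (l1 l2 l3 : seq T) : 0 < s -> s <= sig -> sig <= r ->
  r < r0 -> 2 * r <= a ->
  (forall l, covers sig (oball x r) l -> (size l2 <= size l)%N) ->
  (forall l, covers s (oball x sig) l -> (size l3 <= size l)%N) ->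
  covers s (oball x r) l1 ->
  (size l2)%:R * (size l3)%:R <= ((M * (c * (c * M))) * (M * (c * c)) + M) * (size l1)%:R.
Proof.
move=> s0 ssig sigr rr0 ra Hmin2 Hmin3 H1.
have cc := c0.
have KK : 0 <= (M * (c * (c * M))) * (M * (c * c)).
  by apply: mulr_ge0; apply: mulr_ge0 => //; apply: mulr_ge0 => //; apply: mulr_ge0.
have N10 : (0 : R) <= (size l1)%:R by exact: ler0n.
have sub : oball x sig `<=` oball x r by move=> w; rewrite /oball /=; lra.
have HM : M * (size l1)%:R <= ((M * (c * (c * M))) * (M * (c * c)) + M) * (size l1)%:R.
  by apply: ler_wpM2r => //; rewrite lerDr.
case: (lerP sig (r / 2)) => Hsr; last first.
  have [lb [Hlb Hcb]] := Hb r ltac:(lra) rr0.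
  have Hc : covers sig (oball x r) lb.
    apply: (@covers_mono R T (r / 2)); [lra | exact: covers_sub (@oball_cball x _) Hcb].
  apply: le_trans HM; apply: ler_pM; try exact: ler0n.
    apply: le_trans Hlb; rewrite ler_nat; exact: Hmin2.
  rewrite ler_nat; apply: Hmin3; exact: covers_sub sub H1.
case: (lerP s (sig / 2)) => Hss; last first.
  have [lb [Hlb Hcb]] := Hb sig ltac:(lra) ltac:(lra).
  have Hc : covers s (oball x sig) lb.
    apply: (@covers_mono R T (sig / 2)); [lra | exact: covers_sub (@oball_cball x _) Hcb].
  apply: le_trans HM; rewrite mulrC; apply: ler_pM; try exact: ler0n.
    apply: le_trans Hlb; rewrite ler_nat; exact: Hmin3.
  rewrite ler_nat; apply: Hmin2; exact: (@covers_mono R T s) H1.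
apply: le_trans (lower_main r sig s l1 l2 l3 s0 Hss Hsr rr0 ra Hmin2 Hmin3 H1) _.
by apply: ler_wpM2r => //; rewrite lerDl.
Qed.

End Geo.
Lemma final_ineq (R : realType) (n1 n2 n3 c K : R) : 1 <= n1 -> 1 <= n2 -> 1 <= n3 ->
  1 <= c -> n1 <= n2 * (c * n3) -> n2 * n3 <= K * n1 ->
  `|ln n1 - ln n2 - ln n3| <= ln c + `|ln K|.
Proof.
move=> h1 h2 h3 hc hu hl.
have p1 : 0 < n1 by lra.
have p2 : 0 < n2 by lra.
have p3 : 0 < n3 by lra.
have pc : 0 < c by lra.
have p23 : 1 <= n2 * n3 by nra.
have pK : 0 < K.
  rewrite ltNge; apply/negP => HK.
  have : K * n1 <= 0 by rewrite mulr_le0_ge0 //; lra.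
  lra.
have lc : 0 <= ln c by apply: ln_ge0.
have U : ln n1 <= ln n2 + (ln c + ln n3).
  rewrite -!lnM ?posrE ?mulr_gt0 //.
  by rewrite ler_ln ?posrE ?mulr_gt0.
have L : ln n2 + ln n3 <= ln K + ln n1.
  rewrite -!lnM ?posrE ?mulr_gt0 //.
  by rewrite ler_ln ?posrE ?mulr_gt0.
have a1 := ler_norm (ln K).
have a2 : - ln K <= `|ln K| by rewrite -normrN ler_norm.
rewrite ler_norml; apply/andP; split; lra.
Qed.

Lemma covers_pos (R : realType) (T : metricType R) (x : T) (s rho : R) (l : seq T) :
  0 < rho -> covers s (oball x rho) l -> (0 < size l)%N.
Proof.
move=> rho0 H; have := H x; rewrite /oball /= mdistxx => /(_ rho0).
by case: l H.
Qed.

Lemma covnum_ge0 (R : realType) (T : metricType R) (s : R) (A : set T) : (0 <= covnum s A)%E.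
Proof. by apply: le_ereal_inf_tmp => _ [N _ <-]; rewrite lee_fin ler0n. Qed.

Theorem proposition4p5 (R : realType) (T : metricType R) (x : T) :
  (exists (c a : R), 1 <= c /\ 0 < a /\ a <= 1 /\
     forall (r lam mu : R) (y z : T),
       0 < r -> r <= a -> 0 < lam -> lam <= 1 -> 0 < mu -> mu <= 1 ->
       oball x r y -> oball x r z ->
       (covnum (lam * mu * r) (oball y (lam * r))
          <= c%:E * covnum (lam * mu * r) (oball z (lam * r)))%E) ->
  (forall lam : R, 0 < lam ->
     exists (r0 M : R), 0 < r0 /\
       forall r : R, 0 < r -> r < r0 ->
         (covnum (lam * r) (cball x r) <= M%:E)%E) ->
  exists (t0 M : R), forall t h k : R, t0 < t -> 0 < h -> 0 < k ->
    (`|dgfun x t h k| <= M%:E)%E.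
Proof.
move=> [c [a [c1 [a0 [a1 Ha0]]]]] Hb0.
have [r0 [M [r0pos Hb1]]] := Hb0 (2^-1) ltac:(by rewrite invr_gt0).
have Ha : forall (R0 rho s : R) (y z : T) (l : seq T), 0 < R0 -> R0 <= a ->
  oball x R0 y -> oball x R0 z -> 0 < rho -> rho <= R0 -> 0 < s -> s <= rho ->
  covers s (oball z rho) l ->
  exists l', (size l')%:R <= c * (size l)%:R /\ covers s (oball y rho) l'.
  move=> R0 rho s y z l R00 R0a yx zx rho0 rhoR0 s0 srho Hl.
  have lam0 : 0 < rho / R0 by apply: divr_gt0.
  have lam1 : rho / R0 <= 1 by rewrite ler_pdivrMr // mul1r.
  have mu0 : 0 < s / rho by apply: divr_gt0.
  have mu1 : s / rho <= 1 by rewrite ler_pdivrMr // mul1r.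
  have := Ha0 R0 (rho / R0) (s / rho) y z R00 R0a lam0 lam1 mu0 mu1 yx zx.
  have E1 : rho / R0 * (s / rho) * R0 = s.
    by rewrite mulrAC divfK ?gt_eqF // mulrC divfK ?gt_eqF.
  have E2 : rho / R0 * R0 = rho by rewrite divfK // gt_eqF.
  rewrite E1 E2 => H.
  have H' : (covnum s (oball y rho) <= (c * (size l)%:R)%:E)%E.
    apply: le_trans H _; rewrite EFinM; apply: lee_pmul => //.
    - rewrite lee_fin; lra.
    - exact: covnum_ge0.
    - exact: (@covnum_le _ _ x).
  have [l' [Hl'1 [Hl'2 _]]] := @covnum_exact _ _ x _ _ (@covnum_fin _ _ x _ _ _ H').
  exists l'; split => //; by rewrite -lee_fin -Hl'1.
have Hb : forall rho : R, 0 < rho -> rho < r0 ->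
    exists l, (size l)%:R <= M /\ covers (rho / 2) (cball x rho) l.
  move=> rho rho0 rhor0; have := Hb1 rho rho0 rhor0; rewrite mulrC => H.
  have [l [E [Hc _]]] := @covnum_exact _ _ x _ _ (@covnum_fin _ _ x _ _ _ H).
  exists l; split => //; by rewrite -lee_fin -E.
have M0 : 0 <= M.
  have [l [Hl _]] := Hb (r0 / 2) ltac:(lra) ltac:(lra).
  exact: le_trans (ler0n _ _) Hl.
pose rs := Num.min r0 (a / 2).
have rs0 : 0 < rs by rewrite lt_min r0pos /=; lra.
pose Kc := (M * (c * (c * M))) * (M * (c * c)) + M.
exists (- ln rs), (ln c + `|ln Kc|).
move=> t h k tt0 h0 k0.
have rlt : expR (- t) < rs.
  rewrite -[X in _ < X](@lnK _ rs) ?posrE // ltr_expR; lra.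
have rr0 : expR (- t) < r0 by move: rlt; rewrite lt_min => /andP [].
have ra : 2 * expR (- t) <= a.
  by move: rlt; rewrite lt_min => /andP [_ H]; lra.
rewrite /dgfun /gfun -(addrA t h k).
set r := expR (- t) in rlt rr0 ra *.
set sig := expR (- (t + h)).
set s := expR (- (t + (h + k))).
have s0 : 0 < s by apply: expR_gt0.
have sig0 : 0 < sig by apply: expR_gt0.
have r0' : 0 < r by apply: expR_gt0.
have ssig : s <= sig by rewrite ler_expR; lra.
have sigr : sig <= r by rewrite ler_expR; lra.
have FC := @finite_cov R T x c a r0 M c1 Ha Hb.
have [l1 [E1 [C1 Min1]]] := @covnum_exact _ _ x s (oball x r) (FC s s0 r r0' rr0 ra).
have [l2 [E2 [C2 Min2]]] := @covnum_exact _ _ x sig (oball x r) (FC sig sig0 r r0' rr0 ra).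
have [l3 [E3 [C3 Min3]]] := @covnum_exact _ _ x s (oball x sig) (FC s s0 sig sig0
   ltac:(lra) ltac:(lra)).
rewrite E1 E2 E3.
have n1 := @covers_pos _ _ x _ _ _ r0' C1.
have n2 := @covers_pos _ _ x _ _ _ r0' C2.
have n3 := @covers_pos _ _ x _ _ _ sig0 C3.
rewrite !lne_EFin ?ltr0n // -!EFinB abse_EFin lee_fin.
have [l1' [Hl1' Hc1']] := @upper R T x c a c1 Ha r sig s l2 l3 s0 ssig sigr ra C2 C3.
have U : (size l1)%:R <= (size l2)%:R * (c * (size l3)%:R) :> R.
  apply: le_trans Hl1'; rewrite ler_nat; exact: Min1.
have L := @lower_all R T x c a r0 M c1 M0 Ha Hb r sig s l1 l2 l3 s0 ssig sigr rr0 ra Min2 Min3 C1.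
apply: final_ineq; rewrite ?ler1n //.
  suff -> : (size l3)%:R * (c * (size l2)%:R) = (size l2)%:R * (c * (size l3)%:R) :> R by [].
  ring.
by rewrite mulrC.
Qed.
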